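(* Let $V$ be a finite-dimensional real vector space and $A\subset V$ a finite set of nonzero vectors spanning $V$, no two of which are parallel. The following are equivalent: (i) $A$ is indecomposable; (ii) for every basis $B\subset A$ of $V$, the graph $G(B;A)$ is connected; (iii) for some basis $B\subset A$ of $V$, the graph $G(B;A)$ is connected.
   Context: A decomposition of $A$ is a partition $A=A_1\cup A_2$ into nonempty sets with $V_1\cap V_2=0$, where $V_j=\mathrm{span}(A_j)$; $A$ is indecomposable if it has no decomposition. For a basis $B\subset A$, let $[\cdot,\cdot]_B$ be the inner product for which $B$ is orthonormal, and let $G(B;A)$ be the finite graph with vertex set $B$ and an edge between distinct $x,y\in B$ whenever there is $z\in A\setminus B$ with $[x,z]_B\ne0$ and $[y,z]_B\ne0$. *)

(* Defs.v *)
From HB Require Import structures.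
From mathcomp Require Import all_boot all_order all_algebra.
From mathcomp Require Import reals.
Set Implicit Arguments. Unset Strict Implicit. Unset Printing Implicit Defensive.
Import Order.TTheory GRing.Theory Num.Theory.
Local Open Scope ring_scope.

Section Defs.
Variables (R : realType) (V : vectType R).

Definition decomposition (A A1 A2 : seq V) : Prop :=
  [/\ perm_eq A (A1 ++ A2), A1 != [::], A2 != [::] &
      (<<A1>> :&: <<A2>>)%VS = 0%VS].

Definition indecomposable (A : seq V) : Prop :=
  ~ exists A1 A2 : seq V, decomposition A A1 A2.

(* The inner product [.,.]_B for which the basis B is orthonormal:
   sum of products of coordinates in B. *)
Definition innerB (B : seq V) (u v : V) : R :=
  \sum_(i < size B) coord (in_tuple B) i u * coord (in_tuple B) i v.

Definition GB_edge (A B : seq V) : rel V :=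
  fun x y => [&& x != y &
    has (fun z => [&& z \notin B, innerB B x z != 0 & innerB B y z != 0]) A].

Definition GB_connected (A B : seq V) : Prop :=
  forall x y, x \in B -> y \in B ->
    exists p : seq V, [&& all (mem B) p, path (GB_edge A B) x p & last x p == y].

Definition basis_in (A B : seq V) : Prop :=
  {subset B <= A} /\ basis_of fullv B.

End Defs.

(* Main.v *)
Require Import Defs.
From HB Require Import structures.
From mathcomp Require Import all_boot all_order all_algebra.
From mathcomp Require Import reals.
From Stdlib Require Import Classical ClassicalEpsilon.
Import Order.TTheory GRing.Theory Num.Theory.
Local Open Scope ring_scope.

Section Aux.
Variables (R : realType) (V : vectType R).
Implicit Types (A B S X : seq V).

Lemma innerB_nth B (j : 'I_(size B)) z : free B ->
  innerB B B`_j z = coord (in_tuple B) j z.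
Proof.
move=> fB; rewrite /innerB (bigD1 j) //= big1 => [|i ne].
  by rewrite (coord_free (X := in_tuple B)) // eqxx mul1r addr0.
by rewrite (coord_free (X := in_tuple B)) // eq_sym (negbTE ne) mul0r.
Qed.

Lemma coordB_nth B (i j : 'I_(size B)) : free B ->
  coord (in_tuple B) i B`_j = (j == i)%:R.
Proof. by move=> fB; rewrite (coord_free (X := in_tuple B)). Qed.

Lemma coord_span_zero B S (i : 'I_(size B)) v :
  (forall s, s \in S -> coord (in_tuple B) i s = 0) -> v \in <<S>>%VS ->
  coord (in_tuple B) i v = 0.
Proof.
move=> H /(coord_span (X := in_tuple S)) ->.
rewrite linear_sum big1 // => j _; rewrite linearZ /= H ?mulr0 //.
exact: mem_nth.
Qed.

Lemma expandB B v : basis_of fullv B ->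
  v = \sum_(i < size B) coord (in_tuple B) i v *: B`_i.
Proof.
move=> bB; apply: (coord_span (X := in_tuple B)).
by rewrite /= (span_basis bB) memvf.
Qed.

Lemma zero_of_coords B v : basis_of fullv B ->
  (forall i, coord (in_tuple B) i v = 0) -> v = 0.
Proof.
move=> bB H; rewrite (@expandB B v bB) big1 // => i _; by rewrite H scale0r.
Qed.

Lemma mem_nthB B b : b \in B -> exists j : 'I_(size B), b = B`_j.
Proof.
by case/(nthP 0) => i lt <-; exists (Ordinal lt).
Qed.

Lemma exists_free_sub X : exists Y, {subset Y <= X} /\ free Y /\ <<Y>>%VS = <<X>>%VS.
Proof.
elim: X => [|x X [Y [sYX [fY eY]]]].
  by exists [::]; split => //; split => //; exact: nil_free.
case xX: (x \in <<X>>%VS).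
  exists Y; split; first by move=> v /sYX vX; rewrite inE vX orbT.
  split => //; rewrite span_cons eY; apply/esym/addv_idPr; exact: xX.
exists (x :: Y); split.
  by move=> v; rewrite !inE => /orP[->|/sYX ->] //; rewrite orbT.
by rewrite free_cons eY xX fY !span_cons eY.
Qed.

Lemma exists_basis_in A : <<A>>%VS = fullv -> exists B, basis_in A B.
Proof.
move=> hA; have [Y [sYA [fY eY]]] := exists_free_sub A.
by exists Y; split => //; rewrite /basis_of eY hA eqxx fY.
Qed.

Lemma key A1 A2 B z (k : 'I_(size B)) : basis_of fullv B ->
  (<<A1>> :&: <<A2>>)%VS = 0%VS ->
  (forall j : 'I_(size B), (B`_j \in A1) || (B`_j \in A2)) ->
  z \in A1 -> B`_k \notin A1 -> coord (in_tuple B) k z = 0.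
Proof.
move=> bB cap cov zA1 kA1.
pose u1 := \sum_(j < size B | B`_j \in A1) coord (in_tuple B) j z *: B`_j.
pose u2 := \sum_(j < size B | B`_j \notin A1) coord (in_tuple B) j z *: B`_j.
have ez : z = u1 + u2 by rewrite {1}(@expandB B z bB) (bigID (fun j : 'I_(size B) => B`_j \in A1)).
have u2A2 : u2 \in <<A2>>%VS.
  apply: memv_suml => j jA1; apply: memvZ; apply: memv_span.
  by move: (cov j); rewrite (negbTE jA1).
have u1A1 : u1 \in <<A1>>%VS.
  by apply: memv_suml => j jA1; apply: memvZ; apply: memv_span.
have u2A1 : u2 \in <<A1>>%VS.
  have -> : u2 = z - u1 by rewrite ez addrC addKr.
  by apply: memvB => //; apply: memv_span.
have : u2 \in (<<A1>> :&: <<A2>>)%VS by rewrite memv_cap u2A1 u2A2.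
rewrite cap memv0 => /eqP u20.
have : coord (in_tuple B) k u2 = 0 by rewrite u20 linear0.
rewrite linear_sum (bigD1 k) //= big1 => [|j /andP[_ jk]].
  by rewrite linearZ /= coordB_nth ?(basis_free bB) // eqxx mulr1 addr0.
by rewrite linearZ /= coordB_nth ?(basis_free bB) // (negbTE jk) mulr0.
Qed.

End Aux.
Arguments innerB_nth {R V}.
Arguments coordB_nth {R V}.
Arguments mem_nthB {R V B b}.
Arguments coord_span_zero {R V B S i v}.
Arguments zero_of_coords {R V B v}.
Arguments key {R V A1 A2 B z k}.
Arguments exists_basis_in {R V}.

Section Dirs.
Variables (R : realType) (V : vectType R).

Lemma dir_i_ii (A B : seq V) : basis_in A B -> indecomposable A -> GB_connected A B.
Proof.
move=> [sBA bB] indA x y xB yB.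
have fB := basis_free bB.
pose Reach b := exists p : seq V,
  [&& all (mem B) p, path (GB_edge A B) x p & last x p == b].
case: (classic (Reach y)) => // nRy; exfalso; apply: indA.
pose Rb b : bool := if excluded_middle_informative (Reach b) then true else false.
have RbP b : Rb b <-> Reach b by rewrite /Rb; case: excluded_middle_informative.
pose P a := has (fun b => Rb b && (innerB B b a != 0)) B.
have Rx : Rb x by apply/RbP; exists [::]; rewrite /= eqxx.
have nRby : ~~ Rb y by apply/negP => /RbP.
exists (filter P A), (filter (predC P) A); split.
- by rewrite perm_sym perm_filterC.
- apply/eqP => E; have : x \in filter P A.
    rewrite mem_filter (sBA _ xB) andbT; apply/hasP; exists x => //.
    rewrite Rx /=; have [j ->] := mem_nthB xB.
    by rewrite innerB_nth // coordB_nth // eqxx oner_neq0.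
  by rewrite E.
- apply/eqP => E; have : y \in filter (predC P) A.
    rewrite mem_filter (sBA _ yB) andbT /=; apply/hasPn => b bB0.
    have [k ->] := mem_nthB bB0; have [j ej] := mem_nthB yB.
    rewrite ej innerB_nth // coordB_nth //.
    case jk: (j == k); last by rewrite /= mulr0n eqxx andbF.
    move/eqP: jk => jk.
    by rewrite -jk -ej (negbTE nRby).
  by rewrite E.
- apply/eqP; rewrite -subv0; apply/subvP => v /memv_capP [v1 v2].
  rewrite memv0; apply/eqP; apply: (zero_of_coords bB) => i.
  case Ri: (Rb B`_i).
  + apply: coord_span_zero v2 => s; rewrite mem_filter /= => /andP[nPs _].
    apply/eqP/negPn/negP => cs; move/negP: nPs; apply; apply/hasP.
    by exists B`_i; [exact: mem_nth | rewrite Ri innerB_nth].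
  + apply: coord_span_zero v1 => s; rewrite mem_filter => /andP[Ps sA].
    apply/eqP/negPn/negP => cs; case/hasP: Ps => b bB0 /andP[Rbb ib].
    have [k ek] := mem_nthB bB0; rewrite ek innerB_nth // in ib.
    have eki : B`_k != B`_i.
      by apply/negP => /eqP eki; move: Rbb; rewrite ek eki Ri.
    have sB : s \notin B.
      apply/negP => sB; have [j ej] := mem_nthB sB; move/negP: eki; apply.
      rewrite ej coordB_nth // in cs ib.
      have ji : j == i by move: cs; case: (j == i) => //=; rewrite mulr0n eqxx.
      have jk : j == k by move: ib; rewrite coordB_nth //; case: (j == k) => //=; rewrite mulr0n eqxx.
      by rewrite -(eqP ji) -(eqP jk).
    have : Rb B`_i.
      apply/RbP; case/RbP: Rbb => p /and3P[pB pp lp].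
      exists (rcons p B`_i); rewrite all_rcons rcons_path last_rcons eqxx.
      apply/and3P; split => //; first by rewrite pB andbT; exact: mem_nth.
      rewrite pp /= (eqP lp) ek /GB_edge eki /=.
      apply/hasP; exists s => //; rewrite sB !innerB_nth // ib.
      exact: cs.
    by rewrite Ri.
Qed.

Lemma dir_iii_i (A B : seq V) : uniq A -> 0 \notin A ->
  basis_in A B -> GB_connected A B -> indecomposable A.
Proof.
move=> uA nz [sBA bB] conn [A1 [A2 [pA ne1 ne2 cap]]].
have fB := basis_free bB.
have memA v : (v \in A) = (v \in A1) || (v \in A2) by rewrite (perm_mem pA) mem_cat.
have dis v : v \in A1 -> v \in A2 -> False.
  move=> v1 v2; move: uA; rewrite (perm_uniq pA) cat_uniq => /and3P[_ /hasP nh _].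
  by apply: nh; exists v.
have cov (j : 'I_(size B)) : (B`_j \in A1) || (B`_j \in A2).
  by rewrite -memA; apply: sBA; exact: mem_nth.
have cov' (j : 'I_(size B)) : (B`_j \in A2) || (B`_j \in A1).
  by rewrite orbC.
have cap' : (<<A2>> :&: <<A1>>)%VS = 0%VS by rewrite capvC.
have K1 z (k : 'I_(size B)) : z \in A1 -> B`_k \notin A1 -> coord (in_tuple B) k z = 0.
  by move=> zA kA; apply: (key bB cap cov zA kA).
have K2 z (k : 'I_(size B)) : z \in A2 -> B`_k \notin A2 -> coord (in_tuple B) k z = 0.
  by move=> zA kA; apply: (key bB cap' cov' zA kA).
have getB (A0 : seq V) : A0 != [::] -> {subset A0 <= A} ->
    (forall z (k : 'I_(size B)), z \in A0 -> B`_k \notin A0 -> coord (in_tuple B) k z = 0) ->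
    exists j : 'I_(size B), B`_j \in A0.
  move=> ne sub K.
  have [a aA0] : exists a, a \in A0 by case: (A0) ne => // a s _; exists a; rewrite inE eqxx.
  case: (pickP (fun j : 'I_(size B) => coord (in_tuple B) j a != 0)) => [j cj | H].
    exists j; apply/negPn/negP => nj; move: cj; by rewrite (K a j aA0 nj) eqxx.
  exfalso; have a0 : a = 0.
    by apply: (zero_of_coords bB) => i; apply/eqP; move: (H i) => /= /negbFE.
  by move: nz; rewrite -a0 (sub a aA0).
have s1 : {subset A1 <= A} by move=> v vA; rewrite memA vA.
have s2 : {subset A2 <= A} by move=> v vA; rewrite memA vA orbT.
have [j jA1] := getB A1 ne1 s1 K1.
have [k kA2] := getB A2 ne2 s2 K2.
have inv : forall p b, b \in B -> b \in A1 -> all (mem B) p ->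
    path (GB_edge A B) b p -> last b p \in A1.
  elim=> [//|c p IH] b bB1 bA1 /= /andP[cB pB] /andP[e pp].
  apply: (IH c) => //.
  case/andP: e => _ /hasP[z zA /and3P[zB ib ic]].
  have [a ea] := mem_nthB bB1; have [c' ec] := mem_nthB cB.
  rewrite ea innerB_nth // in ib; rewrite ec innerB_nth // in ic.
  move: (zA); rewrite memA => /orP[zA1|zA2].
    rewrite ec; apply/negPn/negP => nc; move: ic; by rewrite (K1 z c' zA1 nc) eqxx.
  exfalso; apply: (dis b) => //; rewrite ea; apply/negPn/negP => na.
  by move: ib; rewrite (K2 z a zA2 na) eqxx.
have jB : B`_j \in B by apply: mem_nth.
have kB : B`_k \in B by apply: mem_nth.
have [p /and3P[pB pp lp]] := conn _ _ jB kB.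
have := inv p _ jB jA1 pB pp; rewrite (eqP lp) => kA1.
exact: (dis _ kA1 kA2).
Qed.

End Dirs.
Arguments dir_iii_i {R V A B}.
Arguments dir_i_ii {R V A B}.

Theorem mainTheorem10 (R : realType) (V : vectType R) (A : seq V) :
  uniq A ->
  0 \notin A ->
  <<A>>%VS = fullv ->
  (forall x y, x \in A -> y \in A -> x != y -> x \notin <[y]>%VS) ->
  (indecomposable A <-> forall B, basis_in A B -> GB_connected A B) /\
  ((forall B, basis_in A B -> GB_connected A B) <->
     exists B, basis_in A B /\ GB_connected A B).
Proof.
move=> uA nz hA _.
have [B0 hB0] := exists_basis_in A hA.
split; split.
- by move=> ind B hB; apply: dir_i_ii.
- by move=> H; apply: (dir_iii_i uA nz hB0 (H B0 hB0)).
- by move=> H; exists B0; split => //; apply: H.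
- move=> [B [hB cB]] B' hB'; apply: dir_i_ii => //.
  exact: (dir_iii_i uA nz hB cB).
Qed.
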